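(* Let $n \ge s \ge 4$ be integers, let $p$ be an odd prime and let $0 \le j < p$ be an integer. Let \[ F_p(x) = \sum_{k=0}^{s-1} \binom{n}{k+1} G_{k+1}\, p^k\, x^{s-1-k}. \] Then \[ |F_p(j)| \le 3\,(np/\pi)^{s+1}. \]
   Context: The Bernoulli numbers $B_k$ are defined by $\frac{t}{e^t-1} = \sum_{k\ge 0} \frac{B_k}{k!} t^k$, and the Genocchi numbers by $G_k = 2(1-2^k)B_k$. Here $0^0 = 1$. *)

(* Defs.v *)
From Stdlib Require Import Reals List Arith ZArith Znumtheory.
Open Scope R_scope.

(* Bernoulli numbers, convention t/(e^t-1) (so B_1 = -1/2), computed by the
   recurrence equivalent to the generating function:
     B_0 = 1,  sum_{k=0}^{m} C(m+1,k) B_k = 0  for m >= 1,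
   i.e. B_m = -1/(m+1) * sum_{k=0}^{m-1} C(m+1,k) B_k.
   bern_upto n = [B_0; ...; B_n]. *)
Fixpoint bern_upto (n : nat) : list R :=
  match n with
  | O => 1 :: nil
  | S m =>
      let l := bern_upto m in
      l ++ ((- / INR (S n)) * sum_f_R0 (fun k => C (S n) k * nth k l 0) m) :: nil
  end.

Definition bernoulli (n : nat) : R := nth n (bern_upto n) 0.

Definition genocchi (k : nat) : R := 2 * (1 - 2 ^ k) * bernoulli k.

(* F_p(x) = sum_{k=0}^{s-1} binom(n,k+1) G_{k+1} p^k x^{s-1-k}  (0^0 = 1). *)
Definition Fp (n s p : nat) (x : R) : R :=
  sum_f_R0 (fun k => C n (S k) * genocchi (S k) * INR p ^ k * x ^ (s - 1 - k)) (s - 1).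

(* Main.v *)
Require Import Defs.
From Stdlib Require Import Reals List Arith ZArith Znumtheory Lra Lia MVT.
Open Scope R_scope.
From mathcomp Require all_boot all_algebra Rstruct.

Definition conv (a b : nat -> R) (n : nat) : R :=
  sum_f_R0 (fun k => a k * b (n - k)%nat) n.

Module PolyFacts.
Import all_boot all_algebra Rstruct.
Import GRing.Theory.
Local Open Scope ring_scope.

Lemma sumR_big (f : nat -> R) n : sum_f_R0 f n = (\sum_(i < n.+1) f i)%R.
Proof.
elim: n => [|n IH]; first by rewrite big_ord_recr big_ord0 /= add0r.
by rewrite big_ord_recr /= -IH.
Qed.

Lemma conv_coef (a b : nat -> R) N k : (k < N)%N ->
  conv a b k = ((\poly_(i < N) a i) * (\poly_(i < N) b i))`_k.
Proof.
move=> hk; rewrite coefM /conv sumR_big; apply: eq_bigr => j _.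
rewrite !coef_poly.
have hj : (j < N)%N by apply: leq_ltn_trans hk; rewrite -ltnS.
have hkj : (k - j < N)%N by apply: leq_ltn_trans (leq_subr j k) hk.
by rewrite hj hkj.
Qed.

Lemma conv_assoc_p (a b c : nat -> R) n :
  conv (conv a b) c n = conv a (conv b c) n.
Proof.
set pa := \poly_(i < n.+1) a i.
set pb := \poly_(i < n.+1) b i.
set pc := \poly_(i < n.+1) c i.
have E1 : conv (conv a b) c n = ((pa * pb) * pc)`_n.
  rewrite coefM /conv sumR_big; apply: eq_bigr => j _.
  rewrite -/(conv a b j) (conv_coef a b n.+1 j (ltn_ord j)) -/pa -/pb.
  rewrite coef_poly.
  by rewrite (leq_ltn_trans (leq_subr j n) (ltnSn n)).
have E2 : conv a (conv b c) n = (pa * (pb * pc))`_n.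
  rewrite coefM /conv sumR_big; apply: eq_bigr => j _.
  have h : (n - j < n.+1)%N by rewrite ltnS leq_subr.
  rewrite -/(conv b c (n - j)) (conv_coef b c n.+1 (n - j) h) -/pb -/pc.
  by rewrite coef_poly (ltn_ord j).
by rewrite E1 E2 mulrA.
Qed.

Lemma conv_comm_p (a b : nat -> R) n : conv a b n = conv b a n.
Proof.
by rewrite (conv_coef a b n.+1 n (ltnSn n)) (conv_coef b a n.+1 n (ltnSn n)) mulrC.
Qed.
End PolyFacts.

Lemma conv_assoc a b c n : conv (conv a b) c n = conv a (conv b c) n.
Proof. apply PolyFacts.conv_assoc_p. Qed.
Lemma conv_comm a b n : conv a b n = conv b a n.
Proof. apply PolyFacts.conv_comm_p. Qed.

Definition d0 (n : nat) : R := match n with O => 1 | _ => 0 end.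
Definition shft (a : nat -> R) (n : nat) : R := match n with O => 0 | S m => a m end.
Definition Dr (a : nat -> R) (n : nat) : R := INR n * a n.
Definition S2 (a : nat -> R) (n : nat) : R := 2 ^ n * a n.
Definition ex (n : nat) : R := / INR (fact n).

Lemma conv_ext a a' b b' n : (forall k, a k = a' k) -> (forall k, b k = b' k) ->
  conv a b n = conv a' b' n.
Proof. intros Ha Hb; unfold conv; apply sum_eq; intros; rewrite Ha, Hb; auto. Qed.

Lemma conv_plus_l a b c n : conv (fun k => a k + b k) c n = conv a c n + conv b c n.
Proof. unfold conv; rewrite <- sum_plus; apply sum_eq; intros; ring. Qed.

Lemma conv_scal_l r a c n : conv (fun k => r * a k) c n = r * conv a c n.
Proof. unfold conv; rewrite scal_sum; apply sum_eq; intros; ring. Qed.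

Lemma conv_opp_l a c n : conv (fun k => - a k) c n = - conv a c n.
Proof.
rewrite (conv_ext _ (fun k => -1 * a k) c c); [|intros; ring|auto].
rewrite conv_scal_l; ring.
Qed.

Lemma conv_plus_r a b c n : conv c (fun k => a k + b k) n = conv c a n + conv c b n.
Proof. rewrite !(conv_comm c). apply conv_plus_l. Qed.
Lemma conv_scal_r r a c n : conv c (fun k => r * a k) n = r * conv c a n.
Proof. rewrite !(conv_comm c). apply conv_scal_l. Qed.
Lemma conv_opp_r a c n : conv c (fun k => - a k) n = - conv c a n.
Proof. rewrite !(conv_comm c). apply conv_opp_l. Qed.

Lemma conv_d0_r a n : conv a d0 n = a n.
Proof.
unfold conv. destruct n as [|n]. simpl. ring.
rewrite tech5. replace (S n - S n)%nat with 0%nat by lia.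
rewrite (sum_eq _ (fun _ => 0)).
- rewrite sum_cte. simpl. ring.
- intros i hi. replace (S n - i)%nat with (S (n - i)) by lia. simpl. ring.
Qed.
Lemma conv_d0_l a n : conv d0 a n = a n.
Proof. rewrite conv_comm; apply conv_d0_r. Qed.

Lemma conv_shift_l a b n : conv (shft a) b n = shft (conv a b) n.
Proof.
unfold conv. destruct n as [|n]. simpl; ring.
rewrite decomp_sum by lia. simpl. rewrite Rmult_0_l, Rplus_0_l. reflexivity.
Qed.
Lemma conv_shift_r a b n : conv b (shft a) n = shft (conv b a) n.
Proof.
rewrite conv_comm, conv_shift_l. destruct n; simpl; auto. apply conv_comm.
Qed.

Lemma Dr_conv a b n : Dr (conv a b) n = conv (Dr a) b n + conv a (Dr b) n.
Proof.
unfold Dr, conv. rewrite <- sum_plus, scal_sum. apply sum_eq. intros i hi.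
rewrite minus_INR by lia. ring.
Qed.

Lemma S2_conv a b n : S2 (conv a b) n = conv (S2 a) (S2 b) n.
Proof.
unfold S2, conv. rewrite scal_sum. apply sum_eq. intros i hi.
assert (E : 2 ^ n = 2 ^ i * 2 ^ (n - i)) by (rewrite <- pow_add; f_equal; lia).
rewrite E; ring.
Qed.

Lemma conv_ex_ex n : conv ex ex n = S2 ex n.
Proof.
unfold conv, S2, ex.
assert (H := Binomial.binomial 1 1 n).
replace (1 + 1) with 2 in H by ring. rewrite H, Rmult_comm, scal_sum. symmetry.
apply sum_eq. intros i hi. unfold C. rewrite !pow1.
assert (INR (fact i) <> 0) by apply INR_fact_neq_0.
assert (INR (fact (n-i)) <> 0) by apply INR_fact_neq_0.
assert (INR (fact n) <> 0) by apply INR_fact_neq_0.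
field. auto.
Qed.

Lemma bern_S m : bern_upto (S m) = bern_upto m ++
  ((- / INR (S (S m))) * sum_f_R0 (fun k => C (S (S m)) k * nth k (bern_upto m) 0) m) :: nil.
Proof. reflexivity. Qed.

Lemma bern_len n : length (bern_upto n) = S n.
Proof. induction n. reflexivity. rewrite bern_S, length_app, IHn. simpl. lia. Qed.

Lemma bern_nth n k : (k <= n)%nat -> nth k (bern_upto n) 0 = bernoulli k.
Proof.
induction n; intros hk.
- replace k with 0%nat by lia. reflexivity.
- destruct (Nat.eq_dec k (S n)) as [->|hne]. reflexivity.
  rewrite bern_S, app_nth1. apply IHn; lia. rewrite bern_len; lia.
Qed.

Lemma bern_rec m : bernoulli (S m) =
  - / INR (S (S m)) * sum_f_R0 (fun k => C (S (S m)) k * bernoulli k) m.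
Proof.
unfold bernoulli at 1. rewrite bern_S, app_nth2; rewrite bern_len; [|lia].
rewrite Nat.sub_diag. simpl nth. f_equal. apply sum_eq. intros i hi.
rewrite bern_nth; auto.
Qed.

Definition ab (k : nat) : R := bernoulli k / INR (fact k).
Definition Pe (n : nat) : R := ex n - d0 n.
Definition Qe (n : nat) : R := ex n + d0 n.
Definition X1 : nat -> R := shft d0.

Lemma bern0 : bernoulli 0 = 1. Proof. reflexivity. Qed.

Lemma ab_P n : conv ab Pe n = X1 n.
Proof.
destruct n as [|[|m]].
- unfold conv, Pe, ex, X1; simpl. rewrite Rinv_1; ring.
- unfold conv, Pe, ex, X1, ab; simpl. rewrite bern0. unfold Rdiv. rewrite !Rinv_1. ring.
- unfold conv. rewrite tech5. replace (S (S m) - S (S m))%nat with 0%nat by lia.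
  replace (Pe 0) with 0 by (unfold Pe, ex; simpl; rewrite Rinv_1; ring).
  unfold X1. simpl shft.
  assert (H := bern_rec m).
  assert (Hs : sum_f_R0 (fun k => C (S (S m)) k * bernoulli k) (S m) = 0).
  { rewrite tech5. rewrite H.
    assert (HC : C (S (S m)) (S m) = INR (S (S m))).
    { unfold C. replace (S (S m) - S m)%nat with 1%nat by lia.
      replace (fact (S (S m))) with (S (S m) * fact (S m))%nat by reflexivity.
      rewrite mult_INR. simpl (fact 1). assert (INR (fact (S m)) <> 0) by apply INR_fact_neq_0.
      change (INR 1) with 1. field. auto. }
    rewrite HC. field. apply not_0_INR. lia. }
  assert (E : sum_f_R0 (fun k => ab k * Pe (S (S m) - k)) (S m) =
     / INR (fact (S (S m))) * sum_f_R0 (fun k => C (S (S m)) k * bernoulli k) (S m)).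
  { rewrite scal_sum. apply sum_eq. intros i hi. unfold ab, Pe, ex, C.
    replace (d0 (S (S m) - i)) with 0 by (replace (S (S m) - i)%nat with (S (S m - i)) by lia; reflexivity).
    assert (INR (fact i) <> 0) by apply INR_fact_neq_0.
    assert (INR (fact (S (S m) - i)) <> 0) by apply INR_fact_neq_0.
    assert (INR (fact (S (S m))) <> 0) by apply INR_fact_neq_0.
    field. auto. }
  rewrite E, Hs. ring.
Qed.

Lemma conv_sub_l a b c n : conv (fun k => a k - b k) c n = conv a c n - conv b c n.
Proof.
rewrite (conv_ext _ (fun k => a k + (- b k)) c c); [|intros; ring|auto].
rewrite conv_plus_l, conv_opp_l. ring.
Qed.
Lemma conv_sub_r a b c n : conv c (fun k => a k - b k) n = conv c a n - conv c b n.
Proof. rewrite !(conv_comm c). apply conv_sub_l. Qed.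

Lemma PQ n : conv Pe Qe n = S2 Pe n.
Proof.
unfold Pe, Qe. rewrite conv_sub_l, !conv_plus_r, conv_ex_ex, conv_d0_r, conv_d0_r, conv_d0_l.
unfold S2. destruct n; simpl; ring.
Qed.

Lemma cancel_P h : (forall n, conv h Pe n = 0) -> forall n, h n = 0.
Proof.
intros H.
assert (forall n k, (k <= n)%nat -> h k = 0).
{ induction n; intros k hk.
  - replace k with 0%nat by lia. specialize (H 1%nat). unfold conv, Pe, ex in H.
    simpl in H. rewrite Rinv_1 in H. lra.
  - destruct (Nat.eq_dec k (S n)) as [->|hne]; [|apply IHn; lia].
    specialize (H (S (S n))). unfold conv in H. rewrite tech5, tech5 in H.
    rewrite (sum_eq _ (fun _ => 0)) in H.
    + rewrite sum_cte in H. replace (S (S n) - S (S n))%nat with 0%nat in H by lia.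
      replace (S (S n) - S n)%nat with 1%nat in H by lia.
      unfold Pe, ex in H. simpl in H. rewrite Rinv_1 in H. lra.
    + intros i hi. rewrite (IHn i hi). ring. }
intros n; apply (H0 n n); lia.
Qed.

Definition gam (n : nat) : R := 2 * (1 - 2 ^ n) * ab n.

Lemma S2_X1 n : S2 X1 n = 2 * X1 n.
Proof. unfold S2, X1. destruct n as [|[|n]]; simpl; ring. Qed.

Lemma gam_Q n : conv gam Qe n = 2 * X1 n.
Proof.
assert (Hc : forall n, conv (fun k => conv gam Qe k - 2 * X1 k) Pe n = 0).
{ intros m. rewrite conv_sub_l, conv_assoc.
  rewrite (conv_ext gam gam (conv Qe Pe) (S2 Pe)); [|auto|intros; rewrite conv_comm; apply PQ].
  rewrite (conv_ext gam (fun k => 2 * ab k - 2 * S2 ab k) (S2 Pe) (S2 Pe));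
    [|intros; unfold gam, S2; ring|auto].
  rewrite conv_sub_l, !conv_scal_l, <- S2_conv.
  unfold S2 at 1.
  rewrite (conv_ext ab ab (fun k => 2 ^ k * Pe k) (conv Pe Qe)); [|auto|intros; rewrite PQ; auto].
  rewrite <- conv_assoc.
  rewrite (conv_ext (conv ab Pe) X1 Qe Qe); [|apply ab_P|auto].
  unfold S2 at 1. rewrite ab_P. fold (S2 X1 m). rewrite S2_X1.
  assert (E : conv X1 Qe m - conv X1 Pe m = 2 * X1 m).
  { rewrite <- conv_sub_r.
    rewrite (conv_ext X1 X1 _ (fun k => 2 * d0 k)); [|auto|intros; unfold Qe, Pe; ring].
    rewrite conv_scal_r, conv_d0_r. auto. }
  lra. }
intros; apply Rminus_diag_uniq. apply (cancel_P _ Hc n).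
Qed.

Definition nu (n : nat) : R := gam (S n).

Lemma gam0 : gam 0 = 0. Proof. unfold gam; simpl; ring. Qed.

Lemma gam_shft k : gam k = shft nu k.
Proof. destruct k; simpl; [apply gam0|reflexivity]. Qed.

Lemma nu_Q n : conv nu Qe n = 2 * d0 n.
Proof.
assert (H := gam_Q (S n)).
rewrite (conv_ext gam (shft nu) Qe Qe) in H; [|apply gam_shft|auto].
rewrite conv_shift_l in H. simpl in H. exact H.
Qed.

Lemma Dr_Qe k : Dr Qe k = shft ex k.
Proof.
destruct k as [|k]. unfold Dr; simpl; ring.
unfold Dr, Qe. change (d0 (S k)) with 0. change (shft ex (S k)) with (ex k).
unfold ex. rewrite fact_simpl, mult_INR.
assert (INR (fact k) <> 0) by apply INR_fact_neq_0.
assert (INR (S k) <> 0) by (apply not_0_INR; lia).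
field. auto.
Qed.

Lemma riccati_nu n : 2 * Dr nu n + shft (fun k => 2 * nu k - conv nu nu k) n = 0.
Proof.
assert (E1 : forall m, conv (Dr nu) Qe m + shft (fun k => 2 * d0 k - nu k) m = 0).
{ intros m.
  assert (H : Dr (conv nu Qe) m = 0).
  { unfold Dr. rewrite nu_Q. destruct m; simpl; ring. }
  rewrite Dr_conv in H.
  rewrite (conv_ext nu nu (Dr Qe) (shft ex)) in H; [|auto|apply Dr_Qe].
  rewrite conv_shift_r in H.
  rewrite <- H. f_equal. destruct m; simpl; auto.
  rewrite (conv_ext nu nu ex (fun k => Qe k - d0 k)); [|auto|intros; unfold Qe; ring].
  rewrite conv_sub_r, nu_Q, conv_d0_r. reflexivity. }
assert (E2 : conv (fun k => conv (Dr nu) Qe k + shft (fun k => 2 * d0 k - nu k) k) nu n = 0).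
{ rewrite (conv_ext _ (fun _ => 0) nu nu); [|apply E1|auto].
  unfold conv. rewrite (sum_eq _ (fun _ => 0)). rewrite sum_cte; ring. intros; ring. }
rewrite conv_plus_l, conv_assoc, conv_shift_l in E2.
rewrite (conv_ext (Dr nu) (Dr nu) (conv Qe nu) (fun k => 2 * d0 k)) in E2;
  [|auto|intros; rewrite conv_comm; apply nu_Q].
rewrite conv_scal_r, conv_d0_r in E2.
rewrite <- E2. f_equal. destruct n; simpl; auto.
rewrite conv_sub_l, conv_scal_l, conv_d0_l. reflexivity.
Qed.

Definition sgm (n : nat) : R := d0 n - nu n.

Lemma nu0 : nu 0 = 1.
Proof. assert (H := nu_Q 0). unfold conv, Qe, ex in H. simpl in H. rewrite Rinv_1 in H. lra. Qed.

Lemma sig0 : sgm 0 = 0.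
Proof. unfold sgm. rewrite nu0. simpl. ring. Qed.

Lemma riccati_sig n : INR n * sgm n = / 2 * (X1 n - shft (conv sgm sgm) n).
Proof.
assert (H := riccati_nu n). unfold Dr in H.
unfold sgm, X1.
destruct n as [|n]. simpl. ring.
simpl in H |- *.
assert (E : conv (fun k => d0 k - nu k) (fun k => d0 k - nu k) n =
   d0 n - 2 * nu n + conv nu nu n).
{ rewrite conv_sub_l, !conv_sub_r, !conv_d0_l, !conv_d0_r. ring. }
rewrite E. destruct n; simpl in *; lra.
Qed.

Definition Tp (c : nat -> R) (K : nat) (x : R) : R := sum_f_R0 (fun n => c n * x ^ n) K.
Definition dTp (c : nat -> R) (K : nat) (x : R) : R :=
  sum_f_R0 (fun n => c n * (INR n * x ^ pred n)) K.

Lemma Tp_deriv c K x : derivable_pt_lim (Tp c K) x (dTp c K x).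
Proof.
induction K.
- unfold Tp, dTp. simpl.
  replace (c 0%nat * (0 * 1)) with 0 by ring.
  apply (derivable_pt_lim_const (c 0%nat * 1)).
- change (Tp c (S K)) with (plus_fct (Tp c K) (mult_real_fct (c (S K)) (fun y => y ^ S K))).
  change (dTp c (S K) x) with (dTp c K x + c (S K) * (INR (S K) * x ^ pred (S K))).
  apply derivable_pt_lim_plus. exact IHK.
  apply derivable_pt_lim_scal. apply derivable_pt_lim_pow.
Qed.

Lemma Tp_nonneg c K x : (forall n, 0 <= c n) -> 0 <= x -> 0 <= Tp c K x.
Proof.
intros Hc hx. unfold Tp. apply cond_pos_sum. intros n.
apply Rmult_le_pos; auto. apply pow_le; auto.
Qed.

Lemma Tp_mono c K x : (forall n, 0 <= c n) -> 0 <= x -> Tp c K x <= Tp c (S K) x.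
Proof.
intros Hc hx. unfold Tp. simpl.
assert (0 <= c (S K) * (x * x ^ K)). { apply Rmult_le_pos; auto. apply (pow_le x (S K)); auto. }
lra.
Qed.

Lemma conv_sum_le c K x : (forall n, 0 <= c n) -> 0 <= x ->
  sum_f_R0 (fun m => conv c c m * x ^ m) K <= Tp c K x * Tp c K x.
Proof.
intros Hc hx.
destruct K as [|K].
- unfold conv, Tp. simpl. nra.
- unfold Tp. rewrite cauchy_finite by lia.
  assert (E : sum_f_R0 (fun m => conv c c m * x ^ m) (S K) =
     sum_f_R0 (fun k => sum_f_R0 (fun p => c p * x ^ p * (c (k - p)%nat * x ^ (k - p))) k) (S K)).
  { apply sum_eq. intros i hi. unfold conv. rewrite Rmult_comm, scal_sum. apply sum_eq.
    intros j hj. replace (x ^ i) with (x ^ j * x ^ (i - j)) by (rewrite <- pow_add; f_equal; lia).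
    ring. }
  rewrite E.
  assert (0 <= sum_f_R0 (fun k => sum_f_R0 (fun l => c (S (l + k)) * x ^ S (l + k) *
      (c (S K - l)%nat * x ^ (S K - l))) (pred (S K - k))) (pred (S K))).
  { apply cond_pos_sum. intros k. apply cond_pos_sum. intros l.
    apply Rmult_le_pos; apply Rmult_le_pos; auto; apply pow_le; auto. }
  lra.
Qed.

Lemma dTp_bound c K x : c 0%nat = 0 -> (forall n, 0 <= c n) ->
  (forall m, INR (S m) * c (S m) <= / 2 * (d0 m + conv c c m)) -> 0 <= x ->
  dTp c K x <= / 2 * (1 + Tp c K x ^ 2).
Proof.
intros H0 Hc Hr hx.
destruct K as [|K].
- unfold dTp, Tp. simpl. rewrite H0. nra.
- unfold dTp. rewrite decomp_sum by lia. simpl pred. rewrite H0, Rmult_0_l, Rplus_0_l.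
  apply Rle_trans with (sum_f_R0 (fun m => / 2 * (d0 m + conv c c m) * x ^ m) K).
  { apply sum_Rle. intros m hm. simpl pred.
    rewrite <- Rmult_assoc, (Rmult_comm (c (S m))). apply Rmult_le_compat_r.
    apply pow_le; auto. apply Hr. }
  assert (E : sum_f_R0 (fun m => / 2 * (d0 m + conv c c m) * x ^ m) K =
     / 2 * (sum_f_R0 (fun m => d0 m * x ^ m) K + sum_f_R0 (fun m => conv c c m * x ^ m) K)).
  { rewrite <- sum_plus, scal_sum. apply sum_eq. intros; ring. }
  assert (E2 : sum_f_R0 (fun m => d0 m * x ^ m) K = 1).
  { destruct K. simpl. ring. rewrite decomp_sum by lia. simpl.
    rewrite (sum_eq _ (fun _ => 0)). rewrite sum_cte. ring. intros; ring. }
  rewrite E, E2.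
  assert (H1 := conv_sum_le c K x Hc hx).
  assert (H2 := Tp_mono c K x Hc hx).
  assert (H3 := Tp_nonneg c K x Hc hx).
  simpl. nra.
Qed.

Lemma atan_le_id y : 0 <= y -> atan y <= y.
Proof.
intros hy. destruct (Req_dec y 0) as [->|hne]. rewrite atan_0; lra.
assert (hy' : 0 < y) by lra.
destruct (MVT_cor2 (atan - id)%F (fun t => / (1 + t ^ 2) - 1) 0 y hy') as [z [Hz Hz2]].
{ intros t _. apply derivable_pt_lim_minus. apply derivable_pt_lim_atan.
  apply derivable_pt_lim_id. }
unfold minus_fct, id in Hz. rewrite atan_0 in Hz.
assert (/ (1 + z ^ 2) <= 1).
{ rewrite <- Rinv_1. apply Rinv_le_contravar. lra. assert (0 <= z ^ 2) by (apply pow2_ge_0). lra. }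
nra.
Qed.

Lemma Tp_0 c K : c 0%nat = 0 -> Tp c K 0 = 0.
Proof.
intros H0. unfold Tp. induction K. simpl. rewrite H0. ring.
simpl. rewrite IHK. ring.
Qed.

Lemma Tp_atan c K x : c 0%nat = 0 -> (forall n, 0 <= c n) ->
  (forall m, INR (S m) * c (S m) <= / 2 * (d0 m + conv c c m)) -> 0 <= x ->
  atan (Tp c K x) <= x / 2.
Proof.
intros H0 Hc Hr hx.
destruct (Req_dec x 0) as [->|hne]. rewrite Tp_0, atan_0 by auto. lra.
assert (hx' : 0 < x) by lra.
destruct (MVT_cor2 (comp atan (Tp c K) - mult_real_fct (/ 2) id)%F
   (fun t => / (1 + Tp c K t ^ 2) * dTp c K t - / 2 * 1) 0 x hx') as [z [Hz Hz2]].
{ intros t _. apply derivable_pt_lim_minus.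
  apply derivable_pt_lim_comp. apply Tp_deriv. apply derivable_pt_lim_atan.
  apply derivable_pt_lim_scal. apply derivable_pt_lim_id. }
unfold minus_fct, comp, mult_real_fct, id in Hz. rewrite Tp_0, atan_0 in Hz by auto.
assert (Hd := dTp_bound c K z H0 Hc Hr (Rlt_le _ _ (proj1 Hz2))).
set (T := Tp c K z) in *.
assert (hT : 0 < 1 + T ^ 2) by (assert (0 <= T ^ 2) by apply pow2_ge_0; lra).
assert (/ (1 + T ^ 2) * dTp c K z <= / 2).
{ apply Rle_trans with (/ (1 + T ^ 2) * (/ 2 * (1 + T ^ 2))).
  apply Rmult_le_compat_l. left; apply Rinv_0_lt_compat; lra. exact Hd.
  right. field. lra. }
nra.
Qed.

Lemma Tp_le c K d : c 0%nat = 0 -> (forall n, 0 <= c n) ->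
  (forall m, INR (S m) * c (S m) <= / 2 * (d0 m + conv c c m)) -> 0 < d < PI / 2 ->
  Tp c K (PI - 2 * d) <= / d.
Proof.
intros H0 Hc Hr hd.
assert (H := Tp_atan c K (PI - 2 * d) H0 Hc Hr ltac:(lra)).
set (T := Tp c K (PI - 2 * d)) in *.
destruct (Rle_dec T 0). assert (0 < / d) by (apply Rinv_0_lt_compat; lra). lra.
assert (hT : 0 < T) by lra.
assert (H1 := atan_inv T hT).
assert (H2 := atan_le_id (/ T) (Rlt_le _ _ (Rinv_0_lt_compat _ hT))).
assert (d <= / T) by lra.
rewrite <- (Rinv_inv T). apply Rinv_le_contravar; lra.
Qed.

Definition cm (n : nat) : R := Rabs (sgm n).

Lemma cm0 : cm 0 = 0. Proof. unfold cm; rewrite sig0; apply Rabs_R0. Qed.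
Lemma cm_pos n : 0 <= cm n. Proof. apply Rabs_pos. Qed.

Lemma d0_abs k : Rabs (d0 k) = d0 k.
Proof. destruct k; simpl; [apply Rabs_R1|apply Rabs_R0]. Qed.
Lemma d0_pos k : 0 <= d0 k.
Proof. destruct k; simpl; lra. Qed.

Lemma cm_rec m : INR (S m) * cm (S m) <= / 2 * (d0 m + conv cm cm m).
Proof.
assert (H := riccati_sig (S m)). unfold cm.
rewrite <- (Rabs_pos_eq (INR (S m))) by apply pos_INR.
rewrite <- Rabs_mult, H. unfold X1. simpl shft.
rewrite Rabs_mult, Rabs_pos_eq by lra.
apply Rmult_le_compat_l. lra.
eapply Rle_trans. apply Rabs_triang. rewrite Rabs_Ropp, d0_abs.
apply Rplus_le_compat_l. unfold conv. eapply Rle_trans. apply Rsum_abs.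
apply sum_Rle. intros; rewrite Rabs_mult; lra.
Qed.

Lemma gen_eq k : genocchi k = gam k * INR (fact k).
Proof.
unfold genocchi, gam, ab. assert (INR (fact k) <> 0) by apply INR_fact_neq_0. field. auto.
Qed.

Lemma gam_S_bound k : Rabs (gam (S k)) <= d0 k + cm k.
Proof.
change (gam (S k)) with (nu k).
replace (nu k) with (d0 k - sgm k) by (unfold sgm; ring).
eapply Rle_trans. apply Rabs_triang. rewrite Rabs_Ropp, d0_abs. unfold cm; lra.
Qed.

Lemma fact_le n m : (m <= n)%nat -> INR (fact n) <= INR (fact (n - m)) * INR n ^ m.
Proof.
induction m; intros hm.
- rewrite Nat.sub_0_r, pow_O. lra.
- assert (IH := IHm ltac:(lia)).
  replace (n - m)%nat with (S (n - S m)) in IH by lia.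
  rewrite fact_simpl, mult_INR in IH.
  assert (INR (S (n - S m)) <= INR n) by (apply le_INR; lia).
  assert (0 <= INR (fact (n - S m))) by apply pos_INR.
  assert (0 <= INR n ^ m) by (apply pow_le; apply pos_INR).
  assert (INR (S (n - S m)) * (INR (fact (n-S m)) * INR n ^ m) <=
          INR n * (INR (fact (n - S m)) * INR n ^ m)) by (apply Rmult_le_compat_r; nra).
  change (INR n ^ S m) with (INR n * INR n ^ m). nra.
Qed.

Lemma C_le n m : (m <= n)%nat -> 0 <= C n m /\ C n m * INR (fact m) <= INR n ^ m.
Proof.
intros hm. unfold C.
assert (h1 : 0 < INR (fact m)) by apply INR_fact_lt_0.
assert (h2 : 0 < INR (fact (n - m))) by apply INR_fact_lt_0.
assert (h3 : 0 <= INR (fact n)) by apply pos_INR.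
split. apply Rmult_le_pos; auto. left; apply Rinv_0_lt_compat; nra.
replace (INR (fact n) / (INR (fact m) * INR (fact (n - m))) * INR (fact m))
  with (INR (fact n) / INR (fact (n - m))) by (field; lra).
apply (Rmult_le_reg_r (INR (fact (n - m)))); auto.
unfold Rdiv. rewrite Rmult_assoc, Rinv_l by lra.
assert (H := fact_le n m hm). lra.
Qed.

Lemma sum_d0 K x : sum_f_R0 (fun m => d0 m * x ^ m) K = 1.
Proof.
induction K. simpl. ring. simpl. rewrite IHK. ring.
Qed.

Lemma Tp_scale c K x y : (forall n, 0 <= c n) -> 0 < x <= y ->
  Tp c K y <= (y / x) ^ K * Tp c K x.
Proof.
intros Hc hxy. unfold Tp. rewrite scal_sum. apply sum_Rle. intros k hk.
assert (hq : 1 <= y / x) by (apply (Rmult_le_reg_r x); [lra|]; unfold Rdiv; rewrite Rmult_assoc, Rinv_l; lra).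
assert (E : y ^ k = (y / x) ^ k * x ^ k).
{ rewrite <- Rpow_mult_distr. f_equal. field. lra. }
rewrite E.
assert ((y / x) ^ k <= (y / x) ^ K) by (apply Rle_pow; auto).
assert (0 <= x ^ k) by (apply pow_le; lra).
assert (0 <= c k) by auto.
assert (0 <= c k * x ^ k) by (apply Rmult_le_pos; auto).
replace (c k * ((y / x) ^ k * x ^ k)) with (c k * x ^ k * (y / x) ^ k) by ring.
apply Rmult_le_compat_l; auto.
Qed.

Lemma bernoulli_ineq e m : 0 <= e <= 1 -> 1 - INR m * e <= (1 - e) ^ m.
Proof.
intros he. induction m. simpl; lra.
rewrite S_INR. simpl.
assert (0 <= (1 - e) ^ m) by (apply pow_le; lra).
assert (0 <= INR m) by apply pos_INR.
nra.
Qed.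

Lemma PI_lt : PI < 3.2.
Proof.
destruct (Rlt_or_le PI 3.2) as [h|h]; auto. exfalso.
assert (H1 : 0 <= cos (16/10)) by (apply cos_ge_0; lra).
assert (H2 := COS (16/10) ltac:(lra) ltac:(lra)).
assert (H3 : cos_ub (16/10) < 0).
{ unfold cos_ub, cos_approx. cbv [sum_f_R0]. unfold cos_term.
  rewrite !INR_IZR_INZ.
  replace (Z.of_nat (fact (2 * 0))) with 1%Z by reflexivity.
  replace (Z.of_nat (fact (2 * 1))) with 2%Z by reflexivity.
  replace (Z.of_nat (fact (2 * 2))) with 24%Z by reflexivity.
  replace (Z.of_nat (fact (2 * 3))) with 720%Z by reflexivity.
  replace (Z.of_nat (fact (2 * 4))) with 40320%Z by (vm_compute; reflexivity).
  simpl pow. lra. }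
lra.
Qed.

Lemma term_bound n s p j k : (k <= s - 1)%nat -> (s <= n)%nat -> (1 <= s)%nat -> (j <= p)%nat ->
  Rabs (C n (S k) * genocchi (S k) * INR p ^ k * INR j ^ (s - 1 - k)) <=
  INR p ^ (s - 1) * INR n * (d0 k * INR n ^ k + cm k * INR n ^ k).
Proof.
intros hk hs hs1 hj.
destruct (C_le n (S k) ltac:(lia)) as [hC1 hC2].
rewrite gen_eq, !Rabs_mult.
rewrite (Rabs_pos_eq (C n (S k))) by auto.
rewrite (Rabs_pos_eq (INR (fact (S k)))) by apply pos_INR.
rewrite (Rabs_pos_eq (INR p ^ k)) by (apply pow_le; apply pos_INR).
rewrite (Rabs_pos_eq (INR j ^ (s - 1 - k))) by (apply pow_le; apply pos_INR).
assert (hpj : INR p ^ k * INR j ^ (s - 1 - k) <= INR p ^ (s - 1)).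
{ replace (INR p ^ (s - 1)) with (INR p ^ k * INR p ^ (s - 1 - k))
    by (rewrite <- pow_add; f_equal; lia).
  apply Rmult_le_compat_l. apply pow_le; apply pos_INR.
  apply pow_incr. split. apply pos_INR. apply le_INR; auto. }
assert (hg := gam_S_bound k).
assert (h0 : 0 <= Rabs (gam (S k))) by apply Rabs_pos.
assert (h1 : 0 <= INR p ^ k * INR j ^ (s - 1 - k))
  by (apply Rmult_le_pos; apply pow_le; apply pos_INR).
assert (h2 : 0 <= C n (S k) * INR (fact (S k))) by (apply Rmult_le_pos; auto; apply pos_INR).
replace (C n (S k) * (Rabs (gam (S k)) * INR (fact (S k))) * INR p ^ k * INR j ^ (s - 1 - k))
  with ((C n (S k) * INR (fact (S k))) * Rabs (gam (S k)) * (INR p ^ k * INR j ^ (s - 1 - k)))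
  by ring.
replace (INR p ^ (s - 1) * INR n * (d0 k * INR n ^ k + cm k * INR n ^ k))
  with (INR n ^ S k * (d0 k + cm k) * INR p ^ (s - 1)) by (simpl; ring).
apply Rmult_le_compat; auto. apply Rmult_le_pos; auto.
apply Rmult_le_compat; auto.
Qed.

Theorem mainTheorem5 (n s p j : nat)
  (hs : (4 <= s)%nat) (hsn : (s <= n)%nat)
  (hp : prime (Z.of_nat p)) (hodd : Nat.Odd p)
  (hj : (j < p)%nat) :
  Rabs (Fp n s p (INR j)) <= 3 * (INR n * INR p / PI) ^ (s + 1).
Proof.
assert (hp3 : (3 <= p)%nat).
{ destruct hp as [hp1 _]. destruct hodd as [q hq]. lia. }
set (m := (s - 1)%nat).
assert (hsm : s = S m) by (unfold m; lia).
assert (hm3 : (3 <= m)%nat) by (unfold m; lia).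
set (N := INR n). set (Pp := INR p).
set (T := Tp cm m N).
assert (S1 : Rabs (Fp n s p (INR j)) <= Pp ^ m * N * (1 + T)).
{ unfold Fp. eapply Rle_trans. apply Rsum_abs.
  eapply Rle_trans.
  apply (sum_Rle _ (fun k => Pp ^ m * N * (d0 k * N ^ k + cm k * N ^ k))).
  intros k hk. apply term_bound; lia.
  right. rewrite <- (sum_d0 m N). unfold T, Tp. rewrite <- sum_plus, scal_sum.
  apply sum_eq; intros; ring. }
set (A := N / PI).
assert (hPI := PI_lt). assert (hPI0 := PI_RGT_0). assert (hPI4 := PI_4).
assert (hN4 : 4 <= N) by (unfold N; replace 4 with (INR 4) by (simpl; ring); apply le_INR; lia).
assert (hA1 : 1 <= A).
{ unfold A. apply (Rmult_le_reg_r PI); auto. unfold Rdiv. rewrite Rmult_assoc, Rinv_l; lra. }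
assert (hNA : N = PI * A) by (unfold A; field; lra).
assert (hmR : 3 <= INR m) by (replace 3 with (INR 3) by (simpl; ring); apply le_INR; auto).
set (d := PI / (4 * INR m)).
set (x := PI - 2 * d).
set (e := / (2 * INR m)).
assert (hd : 0 < d < PI / 2).
{ unfold d. split. apply Rdiv_lt_0_compat; lra.
  apply (Rmult_lt_reg_r (4 * INR m)). lra. unfold Rdiv. rewrite Rmult_assoc, Rinv_l by lra. nra. }
assert (hx : x = PI * (1 - e)) by (unfold x, d, e; field; lra).
assert (he : 0 <= e <= 1).
{ unfold e. split. left; apply Rinv_0_lt_compat; lra.
  rewrite <- Rinv_1. apply Rinv_le_contravar; lra. }
assert (he6 : e <= / 6).
{ unfold e. apply Rinv_le_contravar; lra. }
assert (hx0 : 0 < x) by (unfold x; lra).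
assert (hxN : x <= N) by (unfold x; lra).
assert (T1 : Tp cm m x <= / d) by (apply Tp_le; auto using cm0, cm_pos, cm_rec).
assert (T2 : T <= (N / x) ^ m * Tp cm m x) by (apply Tp_scale; auto using cm_pos).
assert (hB : 1 / 2 <= (1 - e) ^ m).
{ assert (Hb := bernoulli_ineq e m he).
  replace (INR m * e) with (1 / 2) in Hb by (unfold e; field; lra). lra. }
assert (hNx : (N / x) ^ m <= 2 * A ^ m).
{ replace (N / x) with (A * / (1 - e)) by (rewrite hx; unfold A; field; assert (/6 < 1) by lra; repeat split; lra).
  rewrite Rpow_mult_distr, pow_inv.
  assert (0 < A ^ m) by (apply pow_lt; lra).
  rewrite (Rmult_comm 2). apply Rmult_le_compat_l. lra.
  replace 2 with (/ (1/2)) by field. apply Rinv_le_contravar; lra. }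
assert (hTx0 : 0 <= Tp cm m x) by (apply Tp_nonneg; auto using cm_pos; lra).
assert (hdinv : / d = 4 * INR m / PI) by (unfold d; field; lra).
set (W := A ^ m).
assert (hW1 : 1 <= W) by (apply pow_R1_Rle; auto).
assert (hT : T <= 8 * INR m * W / PI).
{ eapply Rle_trans. apply T2.
  apply Rle_trans with (2 * W * (4 * INR m / PI)).
  apply Rmult_le_compat. apply pow_le. left; apply Rdiv_lt_0_compat; lra.
  exact hTx0. exact hNx. rewrite <- hdinv; exact T1.
  right; field; lra. }
assert (hRHS : (N * Pp / PI) ^ (s + 1) = W * A ^ 2 * (Pp ^ m * Pp ^ 2)).
{ replace (N * Pp / PI) with (A * Pp) by (unfold A; field; lra).
  rewrite hsm. replace (S m + 1)%nat with (m + 2)%nat by lia.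
  rewrite Rpow_mult_distr, !pow_add. unfold W. ring. }
rewrite hRHS.
assert (hPp : 3 <= Pp) by (unfold Pp; replace 3 with (INR 3) by (simpl; ring); apply le_INR; auto).
assert (hPm : 0 < Pp ^ m) by (apply pow_lt; lra).
assert (hsN : INR m + 1 <= N) by (rewrite <- S_INR; unfold N; apply le_INR; lia).
assert (K1 : N * (1 + T) <= PI * A + 8 * INR m * A * W).
{ rewrite hNA. assert (0 <= PI * A) by nra.
  apply Rle_trans with (PI * A * (1 + 8 * INR m * W / PI)).
  apply Rmult_le_compat_l; lra. right; field; lra. }
assert (K2 : 27 * A >= 8.4375 * (INR m + 1)) by nra.
assert (K3 : W * (27 * A - 8 * INR m) >= 8.4375) by nra.
assert (K4 : PI * A + 8 * INR m * A * W <= 27 * W * A ^ 2) by (simpl; nra).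
assert (K5 : 27 * W * A ^ 2 <= 3 * (W * A ^ 2 * Pp ^ 2)).
{ assert (0 <= W * A ^ 2) by (apply Rmult_le_pos; [lra|apply pow2_ge_0]).
  assert (9 <= Pp ^ 2) by (simpl; nra).
  replace (27 * W * A ^ 2) with (3 * (W * A ^ 2 * 9)) by ring.
  apply Rmult_le_compat_l. lra. apply Rmult_le_compat_l; auto. }
eapply Rle_trans. apply S1.
replace (Pp ^ m * N * (1 + T)) with (Pp ^ m * (N * (1 + T))) by ring.
replace (3 * (W * A ^ 2 * (Pp ^ m * Pp ^ 2))) with (Pp ^ m * (3 * (W * A ^ 2 * Pp ^ 2))) by ring.
apply Rmult_le_compat_l. lra. lra.
Qed.
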